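(* For every $k\in\mathbb{N}$, $Q(2,2k;2)=(-1)^k(k!)^2$, that is, \[ \sum_{\ell=0}^{2k}(\ell+1)\,s(2k+1,\ell+1)\,k^{\ell}=(-1)^k(k!)^2. \]
   Context: $s(n,k)$ denotes the signed Stirling numbers of the first kind, defined by $\frac{[\ln(1+x)]^k}{k!}=\sum_{n=k}^\infty s(n,k)\frac{x^n}{n!}$ for $|x|<1$; equivalently $\prod_{j=0}^{n-1}(z-j)=\sum_{k=0}^n s(n,k)z^k$. For $m\in\mathbb{N}$, $k\in\mathbb{N}_0$ and $\alpha\in\mathbb{R}$, $Q(m,k;\alpha)=\sum_{\ell=0}^{k}\binom{m+\ell-1}{m-1}s(m+k-1,m+\ell-1)\left(\frac{m+k-\alpha}{2}\right)^{\ell}$. *)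

(* Defs.v *)
From HB Require Import structures.
From mathcomp Require Import all_boot all_order all_algebra.
Set Implicit Arguments. Unset Strict Implicit. Unset Printing Implicit Defensive.
Import Order.TTheory GRing.Theory Num.Theory.
Local Open Scope ring_scope.

(* Signed Stirling numbers of the first kind, via
   prod_{j=0}^{n-1} (z - j) = sum_k s(n,k) z^k. *)
Definition stirling1 (n k : nat) : int :=
  (\prod_(j < n) ('X - (j%:R)%:P) : {poly int})`_k.

Definition Q (R : realFieldType) (m k : nat) (alpha : R) : R :=
  \sum_(l < k.+1)
     ('C(m + l - 1, m - 1))%:R * (stirling1 (m + k - 1) (m + l - 1))%:~R
       * (((m + k)%:R - alpha) / 2) ^+ l.

(* Main.v *)
Require Import Defs.
From HB Require Import structures.
From mathcomp Require Import all_boot all_order all_algebra.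
From mathcomp Require Import reals.
From mathcomp Require Import zify ring.
Import Order.TTheory GRing.Theory Num.Theory.
Local Open Scope ring_scope.

Lemma factL k : \prod_(0 <= i < k) ((i.+1)%:R : int) = (k`!)%:R.
Proof.
elim: k => [|k IH]; first by rewrite big_geq.
by rewrite big_nat_recr //= IH factS natrM mulrC.
Qed.

Lemma prodA k : \prod_(0 <= j < k) ((k%:R : int) - j%:R) = (k`!)%:R.
Proof.
rewrite -factL big_nat_rev /=.
apply: eq_big_nat => i /andP [_ hi].
rewrite add0n -natrB; last by lia.
congr (_%:R); lia.
Qed.

Lemma prodB k : \prod_(k.+1 <= j < (2*k).+1) ((k%:R : int) - j%:R) = (-1) ^+ k * (k`!)%:R.
Proof.
rewrite -factL -[k.+1]add0n big_addn.
have -> : ((2*k).+1 - k.+1 = k)%N by lia.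
rewrite -[k in (-1) ^+ k]subn0 -(prodr_const_nat 0 k (-1 : int)) -big_split /=.
apply: eq_big_nat => i /andP [_ hi].
rewrite mulN1r -opprB -natrB; last by lia.
congr (- _%:R); lia.
Qed.

Lemma sizeP n : size (\prod_(j < n) ('X - (j%:R : int)%:P)) = n.+1.
Proof. by rewrite size_prod_XsubC /index_enum -enumT size_enum_ord. Qed.

Lemma keyInt k :
  \sum_(l < (2*k).+1) (l.+1)%:R * (\prod_(j < (2*k).+1) ('X - (j%:R : int)%:P))`_l.+1
     * (k%:R)^+l = (-1) ^+ k * (k`!)%:R ^+ 2.
Proof.
set n := (2*k).+1.
set P := \prod_(j < n) _.
have hkn : (k < n)%N by rewrite /n; lia.
have hsz : (size P^`() <= n)%N.
  have := @lt_size_deriv _ P; rewrite /P sizeP; apply.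
  apply/eqP => H; have := sizeP n; by rewrite H size_poly0.
transitivity (P^`().[k%:R]).
  rewrite (horner_coef_wide _ hsz); apply: eq_bigr => l _.
  by rewrite coef_deriv; congr (_ * _); rewrite mulrC mulr_natr.
pose ik : 'I_n := Ordinal hkn.
rewrite /P (bigD1 ik) //= derivM derivXsubC mul1r hornerD hornerM hornerXsubC subrr mul0r addr0.
rewrite horner_prod.
under eq_bigr do rewrite hornerXsubC.
have -> : \prod_(i < n | i != ik) ((k%:R : int) - i%:R) = \prod_(i < n | (i : nat) != k) ((k%:R : int) - i%:R).
  by apply: eq_bigl => i.
rewrite -(big_mkord (fun j => j != k) (fun j => (k%:R : int) - j%:R)).
rewrite (big_cat_nat _ (n := k)) //=; last by rewrite /n; lia.
rewrite [X in _ * X]big_ltn_cond; last by rewrite /n; lia.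
rewrite eqxx /=.
have -> : \prod_(0 <= i < k | i != k) ((k%:R : int) - i%:R) = \prod_(0 <= i < k) ((k%:R : int) - i%:R).
  by rewrite big_nat_cond [RHS]big_nat_cond; apply: eq_bigl => i; apply/idP/idP; case/andP => /andP [_ h] _; rewrite h //= ltn_eqF.
have -> : \prod_(k.+1 <= i < n | i != k) ((k%:R : int) - i%:R) = \prod_(k.+1 <= i < n) ((k%:R : int) - i%:R).
  by rewrite big_nat_cond [RHS]big_nat_cond; apply: eq_bigl => i; apply/idP/idP; case/andP => /andP [h1 h2] _; rewrite h1 h2 //= gtn_eqF.
rewrite prodA prodB; ring.
Qed.

Theorem mainTheorem11 (R : realType) (k : nat) (hk : (0 < k)%N) :
  Q 2 (2 * k) (2 : R) = (-1) ^+ k * ((k`!)%:R ^+ 2).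
Proof.
rewrite /Q.
have hk2 : ((2 + 2 * k)%:R - 2) / 2 = k%:R :> R.
  rewrite natrD natrM addrAC subrr add0r mulrC mulKf // pnatr_eq0 //.


have e1 : (2 + 2 * k - 1 = (2 * k).+1)%N by lia.
rewrite hk2 e1.
transitivity ((\sum_(l < (2*k).+1) (l.+1)%:R * (\prod_(j < (2*k).+1) ('X - (j%:R : int)%:P))`_l.+1
     * (k%:R)^+l)%:~R : R).
  rewrite rmorph_sum; apply: eq_bigr => l _.
  have -> : (2 + l - 1 = l.+1)%N by lia.
  rewrite bin1 /stirling1 !rmorphM rmorphXn /=.
  by rewrite !rmorph_nat.
transitivity (((-1) ^+ k * (k`!)%:R ^+ 2 : int)%:~R : R).
  congr (_%:~R); exact: keyInt.
rewrite rmorphM !rmorphXn /= rmorphN1 rmorph_nat //.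
Qed.
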